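(* Let $n\geq 4$ be an integer and let $x_{1},\dots,x_{n}\in \mathbb{R}$ satisfy $\sum_{i=1}^{n}x_{i}=0$ and $\sum_{i=1}^{n}x_{i}^{2}=1$. Set $x_{0}=x_{n}$. Then $$\sum_{i=1}^{n}x_{i}x_{i-1}< \frac{3n^{2}-4\pi^{2}}{3n^{2}+2\pi^{2}}.$$ *)

(* Defs.v *)
From Stdlib Require Import Reals.
Open Scope R_scope.

Fixpoint sum1n (n : nat) (f : nat -> R) : R :=
  match n with
  | O => 0
  | S m => sum1n m f + f (S m)
  end.

(* Main.v *)
Require Import Defs.
From Stdlib Require Import Reals Lra Lia ZArith.
Open Scope R_scope.
Lemma sum1n_ext n f g : (forall i, (1 <= i <= n)%nat -> f i = g i) -> sum1n n f = sum1n n g.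
Proof. induction n; simpl; intros H; auto. rewrite IHn by (intros; apply H; lia). rewrite H by lia. auto. Qed.
Lemma sum1n_plus n f g : sum1n n (fun i => f i + g i) = sum1n n f + sum1n n g.
Proof. induction n; simpl; [lra|]. rewrite IHn; lra. Qed.
Lemma sum1n_scal n c f : sum1n n (fun i => c * f i) = c * sum1n n f.
Proof. induction n; simpl; [lra|]. rewrite IHn; lra. Qed.
Lemma sum1n_zero n : sum1n n (fun _ => 0) = 0.
Proof. induction n; simpl; [lra|]. rewrite IHn; lra. Qed.
Lemma sum1n_swap n m f : sum1n n (fun i => sum1n m (fun j => f i j)) = sum1n m (fun j => sum1n n (fun i => f i j)).
Proof. induction n; simpl. now rewrite sum1n_zero. rewrite IHn, <- sum1n_plus. auto. Qed.
Lemma sum1n_mult n m f g : sum1n n f * sum1n m g = sum1n n (fun i => sum1n m (fun j => f i * g j)).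
Proof. rewrite Rmult_comm, <- sum1n_scal. apply sum1n_ext; intros. rewrite Rmult_comm, <- sum1n_scal. auto. Qed.
Lemma sum1n_le n f g : (forall i, (1 <= i <= n)%nat -> f i <= g i) -> sum1n n f <= sum1n n g.
Proof. induction n; simpl; intros H; [lra|]. specialize (IHn ltac:(intros; apply H; lia)). specialize (H (S n) ltac:(lia)). lra. Qed.
Lemma sum1n_delta n f p c : (1 <= p <= n)%nat -> sum1n n (fun l => f l * (if Nat.eqb l p then c else 0)) = c * f p.
Proof. intros Hp; induction n; cbn [sum1n]; [lia|].
  destruct (Nat.eq_dec p (S n)).
  - subst. rewrite Nat.eqb_refl. rewrite (sum1n_ext n _ (fun _ => 0)). rewrite sum1n_zero; lra.
    intros i Hi. replace (Nat.eqb i (S n)) with false. lra. symmetry; apply Nat.eqb_neq; lia.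
  - rewrite IHn by lia. replace (Nat.eqb (S n) p) with false. lra. symmetry; apply Nat.eqb_neq; lia.
Qed.

Lemma cosZ x z : cos (x + 2 * IZR z * PI) = cos x.
Proof. destruct (Z.le_gt_cases 0 z).
  - rewrite <- (Z2Nat.id z) by lia. rewrite <- INR_IZR_INZ. apply cos_period.
  - replace z with (- Z.of_nat (Z.to_nat (- z)))%Z by lia. rewrite opp_IZR, <- INR_IZR_INZ.
    rewrite <- (cos_period (x + 2 * - INR (Z.to_nat (- z)) * PI) (Z.to_nat (-z))). f_equal; ring.
Qed.
Lemma sinZ x z : sin (x + 2 * IZR z * PI) = sin x.
Proof. destruct (Z.le_gt_cases 0 z).
  - rewrite <- (Z2Nat.id z) by lia. rewrite <- INR_IZR_INZ. apply sin_period.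
  - replace z with (- Z.of_nat (Z.to_nat (- z)))%Z by lia. rewrite opp_IZR, <- INR_IZR_INZ.
    rewrite <- (sin_period (x + 2 * - INR (Z.to_nat (- z)) * PI) (Z.to_nat (-z))). f_equal; ring.
Qed.
Lemma sum1n_const n c : sum1n n (fun _ => c) = INR n * c.
Proof. induction n; cbn [sum1n]; [simpl; lra|]. rewrite IHn, S_INR; lra. Qed.
Lemma sum1n_tele n g : sum1n n (fun k => g k - g (k - 1)%nat) = g n - g O.
Proof. induction n; cbn [sum1n]; [lra|]. rewrite IHn. replace (S n - 1)%nat with n by lia. lra. Qed.

Section Orth.
Variable n : nat.
Hypothesis Hn : (0 < n)%nat.
Definition th := 2 * PI / INR n.
Definition O m := sum1n n (fun k => cos (th * INR k * m)).

Lemma INRn_pos : 0 < INR n.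
Proof. apply lt_0_INR; lia. Qed.

Lemma orthn q : O (IZR (q * Z.of_nat n)) = INR n.
Proof. unfold O. rewrite (sum1n_ext _ _ (fun _ => 1)). rewrite sum1n_const; lra.
  intros k Hk. rewrite <- (cos_0). rewrite <- (cosZ 0 (Z.of_nat k * q)). f_equal.
  unfold th. rewrite !mult_IZR, <- !INR_IZR_INZ. field. apply Rgt_not_eq, INRn_pos.
Qed.

Lemma orth0 z : (forall q, z <> (q * Z.of_nat n)%Z) -> O (IZR z) = 0.
Proof. intros Hz. set (a := PI * IZR z / INR n).
  assert (Hs : sin a <> 0).
  { intros E. destruct (sin_eq_0_0 _ E) as [k Hk]. apply (Hz k). apply eq_IZR.
    rewrite mult_IZR, <- INR_IZR_INZ. unfold a in Hk. pose proof INRn_pos. pose proof PI_RGT_0.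
    apply (Rmult_eq_reg_r (PI / INR n)). rewrite Rmult_assoc. replace (INR n * (PI / INR n)) with PI by (field; lra).
    rewrite <- Hk. field. lra. apply Rgt_not_eq. apply Rdiv_lt_0_compat; lra. }
  apply (Rmult_eq_reg_l (2 * sin a)); [|lra]. rewrite Rmult_0_r.
  unfold O. rewrite <- sum1n_scal.
  rewrite (sum1n_ext _ _ (fun k => (fun k => sin (2 * a * INR k + a)) k - (fun k => sin (2 * a * INR k + a)) (k-1)%nat)).
  rewrite sum1n_tele. simpl. replace (2 * a * INR n + a) with (a + 2 * IZR z * PI).
  rewrite sinZ. replace (2 * a * 0 + a) with a by ring. ring.
  unfold a. field. apply Rgt_not_eq, INRn_pos.
  intros k Hk. rewrite minus_INR by lia. simpl INR.
  replace (2 * a * (INR k - 1) + a) with (2 * a * INR k - a) by ring.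
  rewrite sin_plus, sin_minus. replace (th * INR k * IZR z) with (2 * a * INR k). ring.
  unfold a, th. field. apply Rgt_not_eq, INRn_pos.
Qed.
End Orth.
Lemma O_neg n m : O n (- m) = O n m.
Proof. unfold O. apply sum1n_ext; intros. replace (th n * INR i * - m) with (- (th n * INR i * m)) by ring. apply cos_neg. Qed.

Lemma sum1n_last n f : (1 <= n)%nat -> sum1n n f = sum1n (n - 1) f + f n.
Proof. destruct n; [lia|]. intros _. cbn [sum1n]. replace (S n - 1)%nat with n by lia. reflexivity. Qed.

Section Main.
Variable n : nat.
Variable x : nat -> R.
Hypothesis Hn : (4 <= n)%nat.
Let Hn0 : (0 < n)%nat. Proof. lia. Qed.

Definition C k := sum1n n (fun j => x j * cos (th n * INR k * INR j)).
Definition Sn k := sum1n n (fun j => x j * sin (th n * INR k * INR j)).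

Lemma F_expand k : C k * C k + Sn k * Sn k =
  sum1n n (fun j => sum1n n (fun l => x j * x l * cos (th n * INR k * (INR j - INR l)))).
Proof. unfold C, Sn. rewrite !sum1n_mult, <- sum1n_plus. apply sum1n_ext; intros j _.
  rewrite <- sum1n_plus. apply sum1n_ext; intros l _.
  replace (th n * INR k * (INR j - INR l)) with (th n * INR k * INR j - th n * INR k * INR l) by ring.
  rewrite cos_minus. ring. Qed.

Lemma weighted r : sum1n n (fun k => (C k * C k + Sn k * Sn k) * cos (th n * INR k * r)) =
  sum1n n (fun j => sum1n n (fun l => x j * x l * ((O n (INR j - INR l + r) + O n (INR j - INR l - r)) / 2))).
Proof.
  rewrite (sum1n_ext _ _ (fun k => sum1n n (fun j => sum1n n (fun l =>
     x j * x l * cos (th n * INR k * (INR j - INR l)) * cos (th n * INR k * r))))).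
  2:{ intros k _. rewrite F_expand, Rmult_comm, <- sum1n_scal. apply sum1n_ext; intros j _.
      rewrite <- sum1n_scal. apply sum1n_ext; intros l _. ring. }
  rewrite sum1n_swap. apply sum1n_ext; intros j _. rewrite sum1n_swap. apply sum1n_ext; intros l _.
  unfold O. rewrite <- sum1n_plus.
  match goal with |- _ = ?a * ?b * (?s / 2) => replace (a * b * (s / 2)) with ((a * b / 2) * s) by (unfold Rdiv; ring) end.
  rewrite <- !sum1n_scal.
  apply sum1n_ext; intros k _.
  replace (th n * INR k * (INR j - INR l + r)) with (th n * INR k * (INR j - INR l) + th n * INR k * r) by ring.
  replace (th n * INR k * (INR j - INR l - r)) with (th n * INR k * (INR j - INR l) - th n * INR k * r) by ring.
  rewrite cos_plus, cos_minus. field.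
Qed.
Definition prev j := if Nat.eqb j 1 then n else (j - 1)%nat.

Lemma IZR_diff j l c : INR j - INR l + IZR c = IZR (Z.of_nat j - Z.of_nat l + c).
Proof. rewrite !INR_IZR_INZ, plus_IZR, minus_IZR. ring. Qed.

Lemma eval1 j l : (1 <= j <= n)%nat -> (1 <= l <= n)%nat ->
  O n (INR j - INR l - 1) = if Nat.eqb l (prev j) then INR n else 0.
Proof. intros Hj Hl. replace (INR j - INR l - 1) with (INR j - INR l + IZR (-1)) by (simpl; ring).
  rewrite IZR_diff. unfold prev.
  destruct (Nat.eqb_spec j 1) as [E|E]; destruct (Nat.eqb_spec l n) as [E2|E2]; destruct (Nat.eqb_spec l (j-1)) as [E3|E3].
  all: try (replace (Z.of_nat j - Z.of_nat l + -1)%Z with (-1 * Z.of_nat n)%Z by lia; apply orthn; lia).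
  all: try (replace (Z.of_nat j - Z.of_nat l + -1)%Z with (0 * Z.of_nat n)%Z by lia; apply orthn; lia).
  all: apply orth0; [lia|]; intros q Hq; assert (q = 0 \/ q >= 1 \/ q <= -1)%Z as [->|[Hq1|Hq1]] by lia; nia.
Qed.

Lemma eval0 j l : (1 <= j <= n)%nat -> (1 <= l <= n)%nat ->
  O n (INR j - INR l) = if Nat.eqb l j then INR n else 0.
Proof. intros Hj Hl. replace (INR j - INR l) with (INR j - INR l + IZR 0) by (simpl; ring).
  rewrite IZR_diff. destruct (Nat.eqb_spec l j) as [E2|E2].
  - replace (Z.of_nat j - Z.of_nat l + 0)%Z with (0 * Z.of_nat n)%Z by lia. apply orthn; lia.
  - apply orth0; [lia|]; intros q Hq; assert (q = 0 \/ q >= 1 \/ q <= -1)%Z as [->|[Hq1|Hq1]] by lia; nia.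
Qed.

Definition Scyc := sum1n n (fun i => x i * (if Nat.eqb i 1 then x n else x (i - 1)%nat)).

Lemma sum1n_half m f g : sum1n m (fun j => f j / 2 + g j / 2) = sum1n m f / 2 + sum1n m g / 2.
Proof. induction m; cbn [sum1n]; [lra|]. rewrite IHm. lra. Qed.

Lemma W1 : sum1n n (fun k => (C k * C k + Sn k * Sn k) * cos (th n * INR k * 1)) = INR n * Scyc.
Proof. rewrite weighted.
  rewrite (sum1n_ext _ _ (fun j => sum1n n (fun l => x j * x l * O n (INR j - INR l + 1)) / 2
     + sum1n n (fun l => x j * x l * O n (INR j - INR l - 1)) / 2)).
  2:{ intros j _. unfold Rdiv. rewrite <- !(Rmult_comm (/2)), <- !sum1n_scal, <- sum1n_plus. apply sum1n_ext; intros; ring. }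
  rewrite sum1n_half.
  replace (sum1n n (fun j => sum1n n (fun l => x j * x l * O n (INR j - INR l + 1))))
    with (sum1n n (fun j => sum1n n (fun l => x j * x l * O n (INR j - INR l - 1)))).
  2:{ rewrite sum1n_swap. apply sum1n_ext; intros j _. apply sum1n_ext; intros l _.
      rewrite <- O_neg. replace (- (INR l - INR j - 1)) with (INR j - INR l + 1) by ring. ring. }
  match goal with |- ?a / 2 + ?a / 2 = _ => replace (a/2 + a/2) with a by field end.
  unfold Scyc. rewrite <- sum1n_scal. apply sum1n_ext; intros j Hj.
  rewrite (sum1n_ext _ _ (fun l => x j * (x l * (if Nat.eqb l (prev j) then INR n else 0)))).
  2:{ intros l Hl. rewrite eval1 by lia. ring. }
  rewrite sum1n_scal, sum1n_delta. unfold prev. destruct (Nat.eqb j 1); field.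
  unfold prev. destruct (Nat.eqb_spec j 1); lia.
Qed.

Lemma W0 : sum1n n (fun k => (C k * C k + Sn k * Sn k) * cos (th n * INR k * 0)) = INR n * sum1n n (fun i => x i ^ 2).
Proof. rewrite weighted. rewrite <- sum1n_scal. apply sum1n_ext; intros j Hj.
  rewrite (sum1n_ext _ _ (fun l => x j * (x l * (if Nat.eqb l j then INR n else 0)))).
  2:{ intros l Hl. rewrite !Rplus_0_r, !Rminus_0_r, eval0 by lia. field. }
  rewrite sum1n_scal, sum1n_delta by lia. ring.
Qed.
End Main.
Lemma th_pos n : (0 < n)%nat -> 0 < th n.
Proof. intros. unfold th. apply Rdiv_lt_0_compat. pose proof PI_RGT_0; lra. apply lt_0_INR; lia. Qed.

Lemma th_le n : (4 <= n)%nat -> th n <= PI / 2.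
Proof. intros H. unfold th. pose proof PI_RGT_0. apply le_INR in H. simpl in H.
  assert (0 < INR n) by lra. unfold Rdiv. apply (Rmult_le_reg_r (INR n)); auto.
  rewrite Rmult_assoc, Rinv_l by lra. nra. Qed.

Lemma cos_le n k : (4 <= n)%nat -> (1 <= k <= n - 1)%nat -> cos (th n * INR k * 1) <= cos (th n).
Proof. intros Hn Hk. pose proof (th_pos n ltac:(lia)). pose proof (th_le n Hn). pose proof PI_RGT_0.
  assert (Hthn : th n * INR n = 2 * PI). { unfold th. field. apply Rgt_not_eq, lt_0_INR; lia. }
  assert (Hk1 : 1 <= INR k) by (apply (le_INR 1); lia).
  assert (Hk2 : INR k <= INR n - 1) by (replace (INR n - 1) with (INR (n - 1)) by (rewrite minus_INR by lia; reflexivity); apply le_INR; lia).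
  rewrite Rmult_1_r. set (t := th n * INR k).
  assert (Ht1 : th n <= t) by (unfold t; nra). assert (Ht2 : t <= 2 * PI - th n) by (unfold t; nra).
  destruct (Rle_lt_dec t PI).
  - destruct (Rle_lt_or_eq_dec _ _ Ht1). left. apply cos_decreasing_1; lra. rewrite <- e. lra.
  - replace (cos t) with (cos (2 * PI - t)).
    destruct (Rle_lt_or_eq_dec _ _ Ht2). left. apply cos_decreasing_1; lra. right. f_equal. rewrite e. ring.
    replace (2 * PI - t) with (- t + 2 * IZR 1 * PI) by (simpl; ring). rewrite cosZ. apply cos_neg.
Qed.

Lemma cos_pade t : 0 < t -> t <= PI / 2 -> cos t < (6 - 2 * t ^ 2) / (6 + t ^ 2).
Proof. intros H0 H1. pose proof PI_4. destruct (cos_bound t 0) as [_ Hc]. pose proof PI_RGT_0. lra. lra.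
  unfold cos_approx in Hc. simpl in Hc. unfold cos_term in Hc. simpl in Hc.
  apply (Rmult_lt_reg_r (6 + t^2)). nra. unfold Rdiv. rewrite Rmult_assoc, Rinv_l by nra.
  assert (t <= 2) by lra. assert (0 < t^2) by nra.
  assert (cos t <= 1 - t^2/2 + t^4/24) by (simpl; lra).
  assert (t^2 <= 4) by nra. assert (0 < t^4) by (apply pow_lt; lra).
  assert (t ^ 6 < 6 * t ^4) by (replace (t^6) with (t^4*t^2) by ring; nra). nra.
Qed.
Theorem proposition2p2 (n : nat) (x : nat -> R) :
  (4 <= n)%nat ->
  sum1n n x = 0 ->
  sum1n n (fun i => x i ^ 2) = 1 ->
  sum1n n (fun i => x i * (if Nat.eqb i 1 then x n else x (i - 1)%nat))
    < (3 * INR n ^ 2 - 4 * PI ^ 2) / (3 * INR n ^ 2 + 2 * PI ^ 2).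
Proof.
  intros Hn Hsum Hsq.
  pose proof (W1 n x Hn) as HW1. pose proof (W0 n x Hn) as HW0. fold (Scyc n x).
  rewrite Hsq, Rmult_1_r in HW0.
  set (F := fun k => C n x k * C n x k + Sn n x k * Sn n x k) in *.
  assert (Hnpos : 0 < INR n) by (apply lt_0_INR; lia).
  assert (HF : forall k, 0 <= F k) by (intros; unfold F; nra).
  assert (HFn : F n = 0).
  { assert (E1 : C n x n = 0). { unfold C. rewrite <- Hsum. apply sum1n_ext; intros j _.
      replace (th n * INR n * INR j) with (0 + 2 * IZR (Z.of_nat j) * PI).
      rewrite cosZ, cos_0; ring. rewrite <- INR_IZR_INZ. unfold th. field. lra. }
    assert (E2 : Sn n x n = 0). { unfold Sn. rewrite <- (sum1n_zero n). apply sum1n_ext; intros j _.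
      replace (th n * INR n * INR j) with (0 + 2 * IZR (Z.of_nat j) * PI).
      rewrite sinZ, sin_0; ring. rewrite <- INR_IZR_INZ. unfold th. field. lra. }
    unfold F. rewrite E1, E2. ring. }
  assert (HS : Scyc n x <= cos (th n)).
  { assert (INR n * Scyc n x <= INR n * cos (th n)); [|nra].
    rewrite <- HW1. rewrite <- HW0.
    unfold F in *. rewrite (sum1n_last n) by lia. rewrite (sum1n_last n) by lia.
    rewrite HFn. rewrite !Rmult_0_l, !Rplus_0_r, Rmult_comm, <- sum1n_scal.
    apply sum1n_le. intros k Hk. rewrite Rmult_0_r, cos_0.
    pose proof (cos_le n k Hn ltac:(lia)). pose proof (HF k). nra. }
  pose proof (cos_pade (th n) (th_pos n ltac:(lia)) (th_le n Hn)).
  replace ((3 * INR n ^ 2 - 4 * PI ^ 2) / (3 * INR n ^ 2 + 2 * PI ^ 2))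
    with ((6 - 2 * th n ^ 2) / (6 + th n ^ 2)). lra.
  unfold th. pose proof PI_RGT_0. field. assert (0 < INR n ^ 2) by (apply pow_lt; lra). assert (0 < PI ^ 2) by (apply pow_lt; lra). repeat split; nra.
Qed.
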